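(* Let $\alpha\in(0,1)\cup(1,\infty)$, let $\rho_{AB}$ be a state on a finite-dimensional $\mathcal{H}_A\otimes\mathcal{H}_B$, and let $U_A$, $V_B$ be unitaries on $\mathcal{H}_A$ and $\mathcal{H}_B$. Then $D^\alpha(\overline{A};B)_{(U_A\otimes V_B)\rho_{AB}(U_A\otimes V_B)^\dagger}=D^\alpha(\overline{A};B)_\rho$.
   Context: All Hilbert spaces are finite-dimensional, $\log$ is natural. For a positive semi-definite $M$ and function $f$, $f(M)$ applies $f$ only to nonzero eigenvalues (negative powers are generalized inverses). For a state $\rho_{ABE}$ and $\alpha\in(0,1)\cup(1,\infty)$, $$I_\alpha(A;B|E)_\rho=\frac{\alpha}{\alpha-1}\log\mathrm{Tr}\Big\{\Big(\rho_E^{(\alpha-1)/2}\,\mathrm{Tr}_A\big\{\rho_{AE}^{(1-\alpha)/2}\rho_{ABE}^{\alpha}\rho_{AE}^{(1-\alpha)/2}\big\}\,\rho_E^{(\alpha-1)/2}\Big)^{1/\alpha}\Big\}.$$ The Rényi quantum discord of $\rho_{AB}$ is $D^\alpha(\overline{A};B)_\rho=\inf_{\{\Lambda_x\}}I_\alpha(E;B|X)_\omega$, the infimum over POVMs $\{\Lambda_x\}$ on $\mathcal{H}_A$, where $\omega_{EXB}=U_{A\to EX}\rho_{AB}U_{A\to EX}^\dagger$ and $U_{A\to EX}$ is an isometric extension of the measurement channel $\sigma\mapsto\sum_x\mathrm{Tr}\{\Lambda_x\sigma\}|x\rangle\langle x|_X$ (the same formula is used for every $\alpha\neq1$). *)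

(* Defs.v *)
From HB Require Import structures.
From mathcomp Require Import all_boot all_order all_algebra.
From mathcomp Require Import spectral.
From mathcomp Require Import complex.
From mathcomp Require mxtens.
From mathcomp Require Import all_classical all_reals.
From mathcomp Require Import ereal exp.

Set Implicit Arguments.
Unset Strict Implicit.
Unset Printing Implicit Defensive.

Import Order.TTheory GRing.Theory Num.Theory.
Local Open Scope ring_scope.

Section QDefs.
Variable R : realType.
Local Notation C := (R[i]).

(* Kronecker (tensor) product; index (i,j) of 'I_(m*n) is i*n+j. *)
Definition kron {m n p q : nat} (A : 'M[C]_(m, n)) (B : 'M[C]_(p, q))
  : 'M[C]_(m * p, n * q) := mxtens.tensmx A B.

Definition tidx {m n : nat} (i : 'I_m) (j : 'I_n) : 'I_(m * n) :=
  mxtens.mxtens_index (i, j).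

Definition adj {m n : nat} (M : 'M[C]_(m, n)) : 'M[C]_(n, m) :=
  map_mx (@Num.conj C) (M ^T).

Definition psd {n : nat} (M : 'M[C]_n) : Prop :=
  adj M = M /\ forall v : 'cV[C]_n, 0 <= (adj v *m M *m v) 0 0.

Definition is_state {n : nat} (rho : 'M[C]_n) : Prop :=
  psd rho /\ \tr rho = 1.

Definition unitary {n : nat} (U : 'M[C]_n) : Prop := U \is unitarymx.

(* Functional calculus for a normal matrix, with f applied only to the
   nonzero eigenvalues (zero eigenvalues are sent to 0). Used on positive
   semidefinite matrices, whose eigenvalues are real and nonnegative. *)
Definition mxfun {n : nat} (f : R -> R) (M : 'M[C]_n) : 'M[C]_n :=
  let P := spectralmx M in
  let d := spectral_diag M in
  invmx P *m
  diag_mx (\row_i (if d 0 i == 0 then 0 else real_complex R (f (complex.Re (d 0 i))))) *m P.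

(* generalized real power M^p (negative powers = generalized inverses) *)
Definition mxpow {n : nat} (M : 'M[C]_n) (p : R) : 'M[C]_n :=
  mxfun (fun x => powR x p) M.

(* Tripartite systems are ordered ((A * B) * C). *)
Definition idx3 {a b c : nat} (i : 'I_a) (j : 'I_b) (k : 'I_c)
  : 'I_(a * b * c) := tidx (tidx i j) k.

Definition ptrB {a b c : nat} (M : 'M[C]_(a * b * c)) : 'M[C]_(a * c) :=
  \sum_(i < a) \sum_(i' < a) \sum_(k < c) \sum_(k' < c)
    (\sum_(j < b) M (idx3 i j k) (idx3 i' j k')) *:
       delta_mx (tidx i k) (tidx i' k').

Definition ptrA {a b c : nat} (M : 'M[C]_(a * b * c)) : 'M[C]_(b * c) :=
  \sum_(j < b) \sum_(j' < b) \sum_(k < c) \sum_(k' < c)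
    (\sum_(i < a) M (idx3 i j k) (idx3 i j' k')) *:
       delta_mx (tidx j k) (tidx j' k').

Definition ptrAB {a b c : nat} (M : 'M[C]_(a * b * c)) : 'M[C]_c :=
  \matrix_(k, k') \sum_(i < a) \sum_(j < b) M (idx3 i j k) (idx3 i j k').

(* X_AC |-> X_AC (x) 1_B, as an operator on ABC *)
Definition extB {a b c : nat} (X : 'M[C]_(a * c)) : 'M[C]_(a * b * c) :=
  \sum_(i < a) \sum_(i' < a) \sum_(j < b) \sum_(k < c) \sum_(k' < c)
    X (tidx i k) (tidx i' k') *: delta_mx (idx3 i j k) (idx3 i' j k').

(* Renyi conditional mutual information I_alpha(A;B|C) of a tripartite
   operator rho on ((A * B) * C). *)
Definition renyi_cmi {a b c : nat} (alpha : R) (rho : 'M[C]_(a * b * c)) : R :=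
  let rAC := ptrB rho in
  let rC := ptrAB rho in
  let S := extB (b := b) (mxpow rAC ((1 - alpha) / 2)) in
  let inner := ptrA (S *m mxpow rho alpha *m S) in
  let T := kron (1%:M : 'M[C]_b) (mxpow rC ((alpha - 1) / 2)) in
  alpha / (alpha - 1) * ln (complex.Re (\tr (mxpow (T *m inner *m T) alpha^-1))).

Definition povm {d k : nat} (L : 'I_k -> 'M[C]_d) : Prop :=
  (forall x, psd (L x)) /\ \sum_(x < k) L x = 1%:M.

(* Canonical isometric extension U_{A -> E X} of the measurement channel
   sigma |-> sum_x Tr(L_x sigma) |x><x|_X, with E = A' (x) X':
     U |psi> = sum_x (sqrt L_x |psi>)_A' (x) |x>_X' (x) |x>_X.
   Output ordering ((A' * X') * X). *)
Definition meas_iso {d k : nat} (L : 'I_k -> 'M[C]_d) : 'M[C]_(d * k * k, d) :=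
  \sum_(x < k) \sum_(a' < d) \sum_(a0 < d)
    (mxpow (L x) (2^-1)) a' a0 *: delta_mx (idx3 a' x x) a0.

Definition swap23 {e x b : nat} (M : 'M[C]_(e * x * b)) : 'M[C]_(e * b * x) :=
  \sum_(i < e) \sum_(i' < e) \sum_(u < x) \sum_(u' < x)
    \sum_(j < b) \sum_(j' < b)
      M (idx3 i u j) (idx3 i' u' j') *: delta_mx (idx3 i j u) (idx3 i' j' u').

(* omega_{EXB} = (U_{A->EX} (x) 1_B) rho_AB (U_{A->EX} (x) 1_B)^dagger,
   reordered as ((E * B) * X) with E = A' (x) X'. *)
Definition post_meas {dA dB k : nat} (L : 'I_k -> 'M[C]_dA)
  (rho : 'M[C]_(dA * dB)) : 'M[C]_(dA * k * dB * k) :=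
  let W := kron (meas_iso L) (1%:M : 'M[C]_dB) in
  swap23 (W *m rho *m adj W).

(* Renyi quantum discord D^alpha(\bar A; B)_rho = inf over POVMs on A
   (with any finite number of outcomes) of I_alpha(E;B|X)_omega. *)
Definition renyi_discord {dA dB : nat} (alpha : R) (rho : 'M[C]_(dA * dB))
  : \bar R :=
  ereal_inf [set r : \bar R | exists (k : nat) (L : 'I_k -> 'M[C]_dA),
                 povm L /\ r = (renyi_cmi alpha (post_meas L rho))%:E].

End QDefs.

(* Main.v *)
Require Import Defs.
From HB Require Import structures.
From mathcomp Require Import all_boot all_order all_algebra.
From mathcomp Require Import spectral complex.
From mathcomp Require mxtens.
From mathcomp Require Import all_classical all_reals.
From mathcomp Require Import ereal exp.
From mathcomp Require Import ring.

Set Implicit Arguments.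
Unset Strict Implicit.
Unset Printing Implicit Defensive.

Import Order.TTheory GRing.Theory Num.Theory.
Local Open Scope ring_scope.
Section P1.
Variable R : realType.
Local Notation C := (R[i]).

Lemma adj_mul m n p (A : 'M[C]_(m, n)) (B : 'M[C]_(n, p)) :
  adj (A *m B) = adj B *m adj A.
Proof. by rewrite /adj trmx_mul map_mxM. Qed.

Lemma adjK m n (A : 'M[C]_(m, n)) : adj (adj A) = A.
Proof.
by apply/matrixP => i j; rewrite !mxE conjCK.
Qed.

Lemma adjmx1 n : adj (1%:M : 'M[C]_n) = 1%:M.
Proof. by rewrite /adj trmx1 map_mx1. Qed.

Lemma adjE (m n : nat) (A : 'M[C]_(m, n)) i j : adj A i j = (A j i)^*.
Proof. by rewrite !mxE. Qed.

Lemma unitary_r n (U : 'M[C]_n) : unitary U -> U *m adj U = 1%:M.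
Proof. by move/unitarymxP. Qed.

Lemma unitary_l n (U : 'M[C]_n) : unitary U -> adj U *m U = 1%:M.
Proof. by move/unitary_r/mulmx1C. Qed.

Lemma unitary_adj n (U : 'M[C]_n) : unitary U -> unitary (adj U).
Proof. by move=> hU; apply/unitarymxP; rewrite -/(adj _) adjK unitary_l. Qed.

Lemma unitary_mul n (U V : 'M[C]_n) : unitary U -> unitary V -> unitary (U *m V).
Proof.
move=> hU hV; apply/unitarymxP; rewrite -/(adj _) adj_mul.
by rewrite mulmxA -(mulmxA U) unitary_r // mulmx1 unitary_r.
Qed.

Lemma conj_swap n (P Q A B : 'M[C]_n) : P \in unitmx -> Q \in unitmx ->
  A *m (P *m invmx Q) = (P *m invmx Q) *m B ->
  invmx Q *m B *m Q = invmx P *m A *m P.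
Proof.
move=> uP uQ H.
have -> : invmx P *m A *m P = invmx P *m (A *m (P *m invmx Q)) *m Q.
  by rewrite -!mulmxA (mulVmx uQ) mulmx1.
by rewrite H !mulmxA (mulVmx uP) mul1mx.
Qed.

Lemma conj_swap' n (P Q A B : 'M[C]_n) : P \in unitmx -> Q \in unitmx ->
  invmx Q *m B *m Q = invmx P *m A *m P ->
  A *m (P *m invmx Q) = (P *m invmx Q) *m B.
Proof.
move=> uP uQ H.
have E1 : A = P *m (invmx P *m A *m P) *m invmx P.
  by rewrite !mulmxA (mulmxV uP) mul1mx -mulmxA (mulmxV uP) mulmx1.
rewrite {1}E1 -H.
by rewrite -!mulmxA (mulmxA (invmx P) P) (mulVmx uP) mul1mx (mulmxV uQ) mulmx1 !mulmxA.
Qed.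

Lemma diag_transfer n (P Q : 'M[C]_n) (d e : 'rV[C]_n) (h : C -> C) :
  P \in unitmx -> Q \in unitmx ->
  invmx Q *m diag_mx e *m Q = invmx P *m diag_mx d *m P ->
  invmx Q *m diag_mx (\row_i h (e 0 i)) *m Q =
  invmx P *m diag_mx (\row_i h (d 0 i)) *m P.
Proof.
move=> uP uQ /(conj_swap' uP uQ) HW; apply: conj_swap => //.
move: (P *m invmx Q) HW => W HW.
apply/matrixP => i j; have := congr1 (fun X : 'M[C]_n => X i j) HW.
rewrite !mul_diag_mx !mul_mx_diag !mxE.
have [->|nz] := eqVneq (W i j) 0; first by move=> _; rewrite mulr0 mul0r.
move=> E; have : W i j * d 0 i = W i j * e 0 j by rewrite mulrC E.
by move/(mulfI nz) => ->; rewrite mulrC.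
Qed.

Lemma invmxM_ n (A B : 'M[C]_n) : A \in unitmx -> B \in unitmx ->
  invmx (A *m B) = invmx B *m invmx A.
Proof.
move=> uA uB; have uAB : A *m B \in unitmx by rewrite unitmx_mul uA uB.
rewrite -[RHS]mulmx1 -(mulmxV uAB) !mulmxA -(mulmxA _ (invmx A) A) mulVmx //.
by rewrite mulmx1 mulVmx // mul1mx.
Qed.

Lemma herm_normal n (M : 'M[C]_n) : adj M = M -> M \is normalmx.
Proof. by move=> hM; apply/normalmxP; rewrite -/(adj M) hM. Qed.

Definition hfun (f : R -> R) (x : C) : C :=
  if x == 0 then 0 else real_complex R (f (complex.Re x)).

Lemma mxfunE n f (M : 'M[C]_n) :
  mxfun f M = invmx (spectralmx M) *m
     diag_mx (\row_i hfun f (spectral_diag M 0 i)) *m spectralmx M.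
Proof. by []. Qed.

Lemma mxfun_conj n f (M G : 'M[C]_n) : adj M = M -> unitary G ->
  mxfun f (G *m M *m adj G) = G *m mxfun f M *m adj G.
Proof.
move=> hM hG.
have hM' : adj (G *m M *m adj G) = G *m M *m adj G.
  by rewrite !adj_mul adjK hM mulmxA.
have /orthomx_spectralP E1 := herm_normal hM.
have /orthomx_spectralP E2 := herm_normal hM'.
set P := spectralmx M in E1 *; set P' := spectralmx (G *m M *m adj G) in E2 *.
have uP : P \in unitmx by apply: spectral_unit.
have uP' : P' \in unitmx by apply: spectral_unit.
have uG : unitary (adj G) by apply: unitary_adj.
have uGu : adj G \in unitmx by apply: unitarymx_unit.
have iG : invmx (adj G) = G by rewrite invmx_unitary // -/(adj _) adjK.
have uPG : P *m adj G \in unitmx by rewrite unitmx_mul uP uGu.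
rewrite !mxfunE.
have E3 : G *m M *m adj G =
    invmx (P *m adj G) *m diag_mx (spectral_diag M) *m (P *m adj G).
  rewrite (invmxM_ uP uGu) iG {1}E1.
  move: (diag_mx _) => D; by rewrite !mulmxA.
rewrite (@diag_transfer _ (P *m adj G) P' (spectral_diag M) _ _ uPG uP').
- rewrite (invmxM_ uP uGu) iG.
  move: (diag_mx _) => D; by rewrite !mulmxA.
- by rewrite -E3 -E2.
Qed.

Lemma mxpow_conj n (M G : 'M[C]_n) p : adj M = M -> unitary G ->
  mxpow (G *m M *m adj G) p = G *m mxpow M p *m adj G.
Proof. exact: mxfun_conj. Qed.

Lemma mxfun_herm n f (M : 'M[C]_n) : adj (mxfun f M) = mxfun f M.
Proof.
have uP := spectral_unitarymx M.
rewrite mxfunE invmx_unitary // -/(adj _) !adj_mul adjK mulmxA; congr (_ *m _ *m _).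
rewrite /adj tr_diag_mx map_diag_mx; congr diag_mx.
apply/matrixP => i j; rewrite !mxE /hfun.
case: eqP => _; first by rewrite rmorph0.
exact: conjc_real.
Qed.

Lemma mxpow_herm n (M : 'M[C]_n) p : adj (mxpow M p) = mxpow M p.
Proof. exact: mxfun_herm. Qed.

End P1.
Section P2.
Variable R : realType.
Local Notation C := (R[i]).

Lemma tidx_eq m n (i i' : 'I_m) (j j' : 'I_n) :
  (tidx i j == tidx i' j') = (i == i') && (j == j').
Proof.
apply/eqP/andP => [H|[/eqP -> /eqP ->] //].
have := congr1 (@mxtens.mxtens_unindex m n) H; rewrite /tidx !mxtens.mxtens_indexK.
by case=> -> ->.
Qed.

Lemma idx3_eq a b c (i i' : 'I_a) (j j' : 'I_b) (k k' : 'I_c) :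
  (idx3 i j k == idx3 i' j' k') = [&& i == i', j == j' & k == k'].
Proof. by rewrite /idx3 !tidx_eq andbA. Qed.

Lemma sum_tidx m n (F : 'I_(m * n) -> C) :
  \sum_r F r = \sum_i \sum_j F (tidx i j).
Proof.
rewrite pair_bigA /= (reindex (@mxtens.mxtens_index m n)) /=; last first.
  by exists (@mxtens.mxtens_unindex m n) => x _;
    rewrite ?mxtens.mxtens_indexK ?mxtens.mxtens_unindexK.
by apply: eq_bigr => -[i j] _.
Qed.

Lemma sum_idx3 a b c (F : 'I_(a * b * c) -> C) :
  \sum_r F r = \sum_i \sum_j \sum_k F (idx3 i j k).
Proof. by rewrite sum_tidx (sum_tidx (fun ij => \sum_k F (tidx ij k))). Qed.

Lemma mx_eq2 m n p q (A B : 'M[C]_(m * n, p * q)) :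
  (forall i k i' k', A (tidx i k) (tidx i' k') = B (tidx i k) (tidx i' k')) ->
  A = B.
Proof.
move=> H; apply/matrixP => r s.
case: (mxtens.mxtens_indexP r) => i k; case: (mxtens.mxtens_indexP s) => i' k'.
exact: H.
Qed.

Lemma mx_eq3 a b c a' b' c' (A B : 'M[C]_(a * b * c, a' * b' * c')) :
  (forall i j k i' j' k', A (idx3 i j k) (idx3 i' j' k') =
                          B (idx3 i j k) (idx3 i' j' k')) -> A = B.
Proof.
move=> H; apply: mx_eq2 => ij k ij' k'.
case: (mxtens.mxtens_indexP ij) => i j; case: (mxtens.mxtens_indexP ij') => i' j'.
exact: H.
Qed.

Lemma kronE m n p q (A : 'M[C]_(m, n)) (B : 'M[C]_(p, q)) i j k l :
  kron A B (tidx i j) (tidx k l) = A i k * B j l.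
Proof. exact: mxtens.tensmxE. Qed.

Lemma kron3E a b c a' b' c' (A : 'M[C]_(a, a')) (B : 'M[C]_(b, b'))
  (D : 'M[C]_(c, c')) i j k i' j' k' :
  kron (kron A B) D (idx3 i j k) (idx3 i' j' k') = A i i' * B j j' * D k k'.
Proof. by rewrite /idx3 !kronE. Qed.

Lemma sum_pick (T : finType) (t0 : T) (F : T -> C) (P : pred T) :
  (forall t, P t -> t = t0) -> \sum_t F t * (P t)%:R = F t0 * (P t0)%:R.
Proof.
move=> H; rewrite (bigD1 t0) //= big1 ?addr0 // => t nt.
case Pt: (P t); last by rewrite mulr0.
by move: nt; rewrite (H _ Pt) eqxx.
Qed.

Lemma sum_delta (I : finType) (j : I) (F : I -> C) :
  \sum_i F i * (i == j)%:R = F j.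
Proof.
rewrite (sum_pick (t0 := j) F (P := fun i => i == j)); first by rewrite eqxx mulr1.
by move=> t /eqP.
Qed.

Lemma sum_delta' (I : finType) (j : I) (F : I -> C) :
  \sum_i F i * (j == i)%:R = F j.
Proof. by rewrite -(sum_delta j F); apply: eq_bigr => i _; rewrite eq_sym. Qed.

Lemma mx1E n (i j : 'I_n) : (1%:M : 'M[C]_n) i j = (i == j)%:R.
Proof. by rewrite mxE. Qed.

Lemma ptrB_E a b c (M : 'M[C]_(a * b * c)) i k i' k' :
  ptrB M (tidx i k) (tidx i' k') = \sum_j M (idx3 i j k) (idx3 i' j k').
Proof.
rewrite /ptrB !pair_bigA summxE /=.
under eq_bigr => t _ do rewrite !mxE.
rewrite (sum_pick (t0 := (i, i', k, k'))) /=.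
  by rewrite !eqxx mulr1.
case=> [[[x y] z] w] /=; rewrite !tidx_eq.
by case/andP => /andP[/eqP <- /eqP <-] /andP[/eqP <- /eqP <-].
Qed.

Lemma ptrA_E a b c (M : 'M[C]_(a * b * c)) j k j' k' :
  ptrA M (tidx j k) (tidx j' k') = \sum_i M (idx3 i j k) (idx3 i j' k').
Proof.
rewrite /ptrA !pair_bigA summxE /=.
under eq_bigr => t _ do rewrite !mxE.
rewrite (sum_pick (t0 := (j, j', k, k'))) /=.
  by rewrite !eqxx mulr1.
case=> [[[x y] z] w] /=; rewrite !tidx_eq.
by case/andP => /andP[/eqP <- /eqP <-] /andP[/eqP <- /eqP <-].
Qed.

Lemma ptrAB_E a b c (M : 'M[C]_(a * b * c)) k k' :
  ptrAB M k k' = \sum_i \sum_j M (idx3 i j k) (idx3 i j k').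
Proof. by rewrite mxE. Qed.

Lemma extB_E a b c (X : 'M[C]_(a * c)) i j k i' j' k' :
  extB (b := b) X (idx3 i j k) (idx3 i' j' k') =
  X (tidx i k) (tidx i' k') * (j == j')%:R.
Proof.
rewrite /extB !pair_bigA summxE /=.
under eq_bigr => t _ do rewrite !mxE.
rewrite (sum_pick (t0 := (i, i', j, k, k'))) /=.
  by rewrite !idx3_eq !eqxx /= ?andbT eq_sym.
case=> [[[[x y] z] w] v] /=; rewrite !idx3_eq.
by case/andP => /and3P[/eqP <- /eqP <- /eqP <-] /and3P[/eqP <- _ /eqP <-].
Qed.

Lemma swap23_E e x b (M : 'M[C]_(e * x * b)) i j u i' j' u' :
  swap23 M (idx3 i j u) (idx3 i' j' u') = M (idx3 i u j) (idx3 i' u' j').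
Proof.
rewrite /swap23 !pair_bigA summxE /=.
under eq_bigr => t _ do rewrite !mxE.
rewrite (sum_pick (t0 := (i, i', u, u', j, j'))) /=.
  by rewrite !idx3_eq !eqxx mulr1.
case=> [[[[[p q] r] s] v] w] /=; rewrite !idx3_eq.
by case/andP => /and3P[/eqP <- /eqP <- /eqP <-] /and3P[/eqP <- /eqP <- /eqP <-].
Qed.

Lemma meas_iso_gen d k (S : 'I_k -> 'M[C]_d) (a' : 'I_d) (x y : 'I_k) (a0 : 'I_d) :
  (\sum_(x < k) \sum_(a' < d) \sum_(a0 < d)
    S x a' a0 *: delta_mx (idx3 a' x x) a0) (idx3 a' x y) a0 =
  S x a' a0 * (x == y)%:R.
Proof.
rewrite !pair_bigA summxE /=.
under eq_bigr => t _ do rewrite !mxE.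
rewrite (sum_pick (t0 := (x, a', a0))) /=.
  by rewrite !idx3_eq !eqxx /= ?andbT eq_sym.
case=> [[p q] r] /=; rewrite !idx3_eq.
by case/andP => /and3P[/eqP <- /eqP <- _] /eqP <-.
Qed.

Lemma meas_iso_E d k (L : 'I_k -> 'M[C]_d) a' x y a0 :
  meas_iso L (idx3 a' x y) a0 = mxpow (L x) (2^-1) a' a0 * (x == y)%:R.
Proof. exact: (meas_iso_gen (fun x => mxpow (L x) (2^-1))). Qed.

End P2.
Section P3.
Variable R : realType.
Local Notation C := (R[i]).

Lemma mul3l a b c a' b' c' (A : 'M[C]_(a, a')) (B : 'M[C]_(b, b'))
  (D : 'M[C]_(c, c')) n (M : 'M[C]_(a' * b' * c', n)) i j k s :
  (kron (kron A B) D *m M) (idx3 i j k) s =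
  \sum_p \sum_q \sum_l A i p * B j q * D k l * M (idx3 p q l) s.
Proof. by rewrite mxE sum_idx3; do 3!(apply: eq_bigr => ? _); rewrite kron3E. Qed.

Lemma mul3r a b c a' b' c' (A : 'M[C]_(a, a')) (B : 'M[C]_(b, b'))
  (D : 'M[C]_(c, c')) n (M : 'M[C]_(n, a * b * c)) r i j k :
  (M *m kron (kron A B) D) r (idx3 i j k) =
  \sum_p \sum_q \sum_l M r (idx3 p q l) * (A p i * B q j * D l k).
Proof. by rewrite mxE sum_idx3; do 3!(apply: eq_bigr => ? _); rewrite kron3E. Qed.

Lemma mul3l_mid a b c (A : 'M[C]_a) (D : 'M[C]_c) n (M : 'M[C]_(a * b * c, n)) i j k s :
  (kron (kron A 1%:M) D *m M) (idx3 i j k) s =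
  \sum_p \sum_l A i p * D k l * M (idx3 p j l) s.
Proof.
rewrite mul3l; apply: eq_bigr => p _; rewrite (bigD1 j) //= [X in _ + X]big1 ?addr0.
  by apply: eq_bigr => l _; rewrite mx1E eqxx mulr1.
move=> q nq; apply: big1 => l _.
by rewrite mx1E eq_sym (negbTE nq) mulr0 !mul0r.
Qed.

Lemma mul3r_mid a b c (A : 'M[C]_a) (D : 'M[C]_c) n (M : 'M[C]_(n, a * b * c)) r i j k :
  (M *m kron (kron A 1%:M) D) r (idx3 i j k) =
  \sum_p \sum_l M r (idx3 p j l) * (A p i * D l k).
Proof.
rewrite mul3r; apply: eq_bigr => p _; rewrite (bigD1 j) //= [X in _ + X]big1 ?addr0.
  by apply: eq_bigr => l _; rewrite mx1E eqxx mulr1.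
move=> q nq; apply: big1 => l _.
by rewrite mx1E (negbTE nq) mulr0 !mul0r mulr0.
Qed.

Lemma mul3l_first a b c (B : 'M[C]_b) (D : 'M[C]_c) n (M : 'M[C]_(a * b * c, n)) i j k s :
  (kron (kron 1%:M B) D *m M) (idx3 i j k) s =
  \sum_q \sum_l B j q * D k l * M (idx3 i q l) s.
Proof.
rewrite mul3l (bigD1 i) //= [X in _ + X]big1 ?addr0.
  by apply: eq_bigr => q _; apply: eq_bigr => l _; rewrite mx1E eqxx mul1r.
move=> p np; apply: big1 => q _; apply: big1 => l _.
by rewrite mx1E eq_sym (negbTE np) !mul0r.
Qed.

Lemma mul3r_first a b c (B : 'M[C]_b) (D : 'M[C]_c) n (M : 'M[C]_(n, a * b * c)) r i j k :
  (M *m kron (kron 1%:M B) D) r (idx3 i j k) =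
  \sum_q \sum_l M r (idx3 i q l) * (B q j * D l k).
Proof.
rewrite mul3r (bigD1 i) //= [X in _ + X]big1 ?addr0.
  by apply: eq_bigr => q _; apply: eq_bigr => l _; rewrite mx1E eqxx mul1r.
move=> p np; apply: big1 => q _; apply: big1 => l _.
by rewrite mx1E (negbTE np) !mul0r mulr0.
Qed.

Lemma mul3l_last a b c (A : 'M[C]_a) (B : 'M[C]_b) n (M : 'M[C]_(a * b * c, n)) i j k s :
  (kron (kron A B) 1%:M *m M) (idx3 i j k) s =
  \sum_p \sum_q A i p * B j q * M (idx3 p q k) s.
Proof.
rewrite mul3l; apply: eq_bigr => p _; apply: eq_bigr => q _.
rewrite (bigD1 k) //= [X in _ + X]big1 ?addr0; first by rewrite mx1E eqxx mulr1.
by move=> l nl; rewrite mx1E eq_sym (negbTE nl) mulr0 mul0r.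
Qed.

Lemma mul3r_last a b c (A : 'M[C]_a) (B : 'M[C]_b) n (M : 'M[C]_(n, a * b * c)) r i j k :
  (M *m kron (kron A B) 1%:M) r (idx3 i j k) =
  \sum_p \sum_q M r (idx3 p q k) * (A p i * B q j).
Proof.
rewrite mul3r; apply: eq_bigr => p _; apply: eq_bigr => q _.
rewrite (bigD1 k) //= [X in _ + X]big1 ?addr0; first by rewrite mx1E eqxx mulr1.
by move=> l nl; rewrite mx1E (negbTE nl) mulr0 mulr0.
Qed.

Lemma mul3l_fl a b c (B : 'M[C]_b) n (M : 'M[C]_(a * b * c, n)) i j k s :
  (kron (kron 1%:M B) 1%:M *m M) (idx3 i j k) s =
  \sum_q B j q * M (idx3 i q k) s.
Proof.
rewrite mul3l_last (bigD1 i) //= [X in _ + X]big1 ?addr0.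
  by apply: eq_bigr => q _; rewrite mx1E eqxx mul1r.
by move=> p np; apply: big1 => q _; rewrite mx1E eq_sym (negbTE np) !mul0r.
Qed.

Lemma mul3r_fl a b c (B : 'M[C]_b) n (M : 'M[C]_(n, a * b * c)) r i j k :
  (M *m kron (kron 1%:M B) 1%:M) r (idx3 i j k) =
  \sum_q M r (idx3 i q k) * B q j.
Proof.
rewrite mul3r_last (bigD1 i) //= [X in _ + X]big1 ?addr0.
  by apply: eq_bigr => q _; rewrite mx1E eqxx mul1r.
by move=> p np; apply: big1 => q _; rewrite mx1E (negbTE np) !mul0r mulr0.
Qed.

Lemma mul3l_ml a b c (A : 'M[C]_a) n (M : 'M[C]_(a * b * c, n)) i j k s :
  (kron (kron A 1%:M) 1%:M *m M) (idx3 i j k) s =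
  \sum_p A i p * M (idx3 p j k) s.
Proof.
rewrite mul3l_last; apply: eq_bigr => p _; rewrite (bigD1 j) //= [X in _ + X]big1 ?addr0.
  by rewrite mx1E eqxx mulr1.
by move=> q nq; rewrite mx1E eq_sym (negbTE nq) mulr0 mul0r.
Qed.

Lemma mul3r_ml a b c (A : 'M[C]_a) n (M : 'M[C]_(n, a * b * c)) r i j k :
  (M *m kron (kron A 1%:M) 1%:M) r (idx3 i j k) =
  \sum_p M r (idx3 p j k) * A p i.
Proof.
rewrite mul3r_last; apply: eq_bigr => p _; rewrite (bigD1 j) //= [X in _ + X]big1 ?addr0.
  by rewrite mx1E eqxx mulr1.
by move=> q nq; rewrite mx1E (negbTE nq) mulr0 mulr0.
Qed.

End P3.
Section P4.
Variable R : realType.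
Local Notation C := (R[i]).

Lemma adj_kron m n p q (A : 'M[C]_(m, n)) (B : 'M[C]_(p, q)) :
  adj (kron A B) = kron (adj A) (adj B).
Proof. by rewrite /adj /kron mxtens.trmx_tens mxtens.map_mxT. Qed.

Lemma kron_mul m n p q r s (A : 'M[C]_(m, n)) (B : 'M[C]_(p, q))
  (D : 'M[C]_(n, r)) (E : 'M[C]_(q, s)) :
  kron A B *m kron D E = kron (A *m D) (B *m E).
Proof. exact: mxtens.tensmx_mul. Qed.

Lemma kron11 m n : kron (1%:M : 'M[C]_m) (1%:M : 'M[C]_n) = 1%:M.
Proof.
apply: mx_eq2 => i k i' k'.
by rewrite kronE !mx1E tidx_eq -natrM mulnb.
Qed.

Lemma unitary1 n : unitary (1%:M : 'M[C]_n).
Proof. by apply/unitarymxP; rewrite -/(adj _) adjmx1 mulmx1. Qed.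

Lemma unitary_kron m n (A : 'M[C]_m) (B : 'M[C]_n) :
  unitary A -> unitary B -> unitary (kron A B).
Proof.
move=> hA hB; apply/unitarymxP; rewrite -/(adj _) adj_kron kron_mul.
by rewrite !unitary_r // kron11.
Qed.

Lemma ptrB_mull a b c (A : 'M[C]_a) (D : 'M[C]_c) (M : 'M[C]_(a * b * c)) :
  ptrB (kron (kron A 1%:M) D *m M) = kron A D *m ptrB M.
Proof.
apply: mx_eq2 => i k i' k'; rewrite ptrB_E mxE sum_tidx.
under eq_bigr => j _ do rewrite mul3l_mid.
rewrite exchange_big; apply: eq_bigr => p _; rewrite exchange_big.
apply: eq_bigr => l _; rewrite kronE ptrB_E mulr_sumr.
by apply: eq_bigr => j _.
Qed.

Lemma ptrB_mulr a b c (A : 'M[C]_a) (D : 'M[C]_c) (M : 'M[C]_(a * b * c)) :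
  ptrB (M *m kron (kron A 1%:M) D) = ptrB M *m kron A D.
Proof.
apply: mx_eq2 => i k i' k'; rewrite ptrB_E mxE sum_tidx.
under eq_bigr => j _ do rewrite mul3r_mid.
rewrite exchange_big; apply: eq_bigr => p _; rewrite exchange_big.
apply: eq_bigr => l _; rewrite kronE ptrB_E mulr_suml.
by apply: eq_bigr => j _.
Qed.

Lemma ptrB_cyc a b c (B : 'M[C]_b) (M : 'M[C]_(a * b * c)) :
  ptrB (kron (kron 1%:M B) 1%:M *m M) = ptrB (M *m kron (kron 1%:M B) 1%:M).
Proof.
apply: mx_eq2 => i k i' k'; rewrite !ptrB_E.
under eq_bigr => j _ do rewrite mul3l_fl.
symmetry; apply: eq_trans (eq_bigr _ (fun j _ => mul3r_fl B M (idx3 i j k) i' j k')) _.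
rewrite exchange_big; apply: eq_bigr => j _; apply: eq_bigr => q _.
by rewrite mulrC.
Qed.

Lemma ptrA_mull a b c (B : 'M[C]_b) (D : 'M[C]_c) (M : 'M[C]_(a * b * c)) :
  ptrA (kron (kron 1%:M B) D *m M) = kron B D *m ptrA M.
Proof.
apply: mx_eq2 => j k j' k'; rewrite ptrA_E mxE sum_tidx.
under eq_bigr => i _ do rewrite mul3l_first.
rewrite exchange_big; apply: eq_bigr => q _; rewrite exchange_big.
apply: eq_bigr => l _; rewrite kronE ptrA_E mulr_sumr.
by apply: eq_bigr => i _.
Qed.

Lemma ptrA_mulr a b c (B : 'M[C]_b) (D : 'M[C]_c) (M : 'M[C]_(a * b * c)) :
  ptrA (M *m kron (kron 1%:M B) D) = ptrA M *m kron B D.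
Proof.
apply: mx_eq2 => j k j' k'; rewrite ptrA_E mxE sum_tidx.
under eq_bigr => i _ do rewrite mul3r_first.
rewrite exchange_big; apply: eq_bigr => q _; rewrite exchange_big.
apply: eq_bigr => l _; rewrite kronE ptrA_E mulr_suml.
by apply: eq_bigr => i _.
Qed.

Lemma ptrA_cyc a b c (A : 'M[C]_a) (M : 'M[C]_(a * b * c)) :
  ptrA (kron (kron A 1%:M) 1%:M *m M) = ptrA (M *m kron (kron A 1%:M) 1%:M).
Proof.
apply: mx_eq2 => j k j' k'; rewrite !ptrA_E.
under eq_bigr => i _ do rewrite mul3l_ml.
symmetry; apply: eq_trans (eq_bigr _ (fun i _ => mul3r_ml A M (idx3 i j k) i j' k')) _.
rewrite exchange_big; apply: eq_bigr => i _; apply: eq_bigr => p _.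
by rewrite mulrC.
Qed.

Lemma swap4 (I J K L : finType) (F : I -> J -> K -> L -> C) :
  \sum_i \sum_j \sum_p \sum_q F i j p q = \sum_p \sum_q \sum_i \sum_j F i j p q.
Proof.
rewrite pair_bigA; symmetry; rewrite pair_bigA.
under eq_bigr => x _ do rewrite pair_bigA.
symmetry; under eq_bigr => x _ do rewrite pair_bigA.
exact: exchange_big.
Qed.

Lemma ptrAB_cyc a b c (A : 'M[C]_a) (B : 'M[C]_b) (M : 'M[C]_(a * b * c)) :
  ptrAB (kron (kron A B) 1%:M *m M) = ptrAB (M *m kron (kron A B) 1%:M).
Proof.
apply/matrixP => k k'; rewrite !ptrAB_E.
under eq_bigr => i _ do under eq_bigr => j _ do rewrite mul3l_last.
symmetry; apply: eq_trans (eq_bigr _ (fun i _ => eq_bigr _ (fun j _ =>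
  mul3r_last A B M (idx3 i j k) i j k'))) _.
rewrite swap4; do 4!(apply: eq_bigr => ? _).
by rewrite mulrC.
Qed.

Lemma extB_mull a b c (A : 'M[C]_a) (D : 'M[C]_c) (X : 'M[C]_(a * c)) :
  extB (b := b) (kron A D *m X) = kron (kron A 1%:M) D *m extB X.
Proof.
apply: mx_eq3 => i j k i' j' k'.
rewrite extB_E mul3l_mid mxE sum_tidx mulr_suml; apply: eq_bigr => p _.
rewrite mulr_suml; apply: eq_bigr => l _.
by rewrite extB_E kronE mulrA.
Qed.

Lemma extB_mulr a b c (A : 'M[C]_a) (D : 'M[C]_c) (X : 'M[C]_(a * c)) :
  extB (b := b) (X *m kron A D) = extB X *m kron (kron A 1%:M) D.
Proof.
apply: mx_eq3 => i j k i' j' k'.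
rewrite extB_E mul3r_mid mxE sum_tidx mulr_suml; apply: eq_bigr => p _.
rewrite mulr_suml; apply: eq_bigr => l _.
by rewrite extB_E kronE mulrAC.
Qed.

Lemma extB_comm a b c (B : 'M[C]_b) (X : 'M[C]_(a * c)) :
  extB (b := b) X *m kron (kron 1%:M B) 1%:M =
  kron (kron 1%:M B) 1%:M *m extB X.
Proof.
apply: mx_eq3 => i j k i' j' k'.
rewrite mul3l_fl mul3r_fl.
under eq_bigr => q _ do rewrite extB_E mulrAC.
rewrite sum_delta'.
under eq_bigr => q _ do rewrite extB_E mulrA.
by rewrite sum_delta mulrC.
Qed.

Lemma swap23_mull e x b (A : 'M[C]_e) (D : 'M[C]_x) (B : 'M[C]_b)
  (M : 'M[C]_(e * x * b)) :
  swap23 (kron (kron A D) B *m M) = kron (kron A B) D *m swap23 M.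
Proof.
apply: mx_eq3 => i j u i' j' u'.
rewrite swap23_E !mul3l; apply: eq_bigr => p _; rewrite exchange_big.
apply: eq_bigr => l _; apply: eq_bigr => q _.
by rewrite swap23_E; congr (_ * _); rewrite mulrAC.
Qed.

Lemma swap23_mulr e x b (A : 'M[C]_e) (D : 'M[C]_x) (B : 'M[C]_b)
  (M : 'M[C]_(e * x * b)) :
  swap23 (M *m kron (kron A D) B) = swap23 M *m kron (kron A B) D.
Proof.
apply: mx_eq3 => i j u i' j' u'.
rewrite swap23_E !mul3r; apply: eq_bigr => p _; rewrite exchange_big.
apply: eq_bigr => l _; apply: eq_bigr => q _.
by rewrite swap23_E; congr (_ * _); rewrite mulrAC.
Qed.

Lemma ptrB_adj a b c (M : 'M[C]_(a * b * c)) : adj (ptrB M) = ptrB (adj M).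
Proof.
apply: mx_eq2 => i k i' k'; rewrite adjE !ptrB_E rmorph_sum.
by apply: eq_bigr => j _; rewrite adjE.
Qed.

Lemma ptrA_adj a b c (M : 'M[C]_(a * b * c)) : adj (ptrA M) = ptrA (adj M).
Proof.
apply: mx_eq2 => i k i' k'; rewrite adjE !ptrA_E rmorph_sum.
by apply: eq_bigr => j _; rewrite adjE.
Qed.

Lemma extB_adj a b c (X : 'M[C]_(a * c)) : adj (extB (b := b) X) = extB (adj X).
Proof.
apply: mx_eq3 => i j k i' j' k'; rewrite adjE !extB_E rmorphM rmorph_nat adjE.
by rewrite eq_sym.
Qed.

Lemma swap23_adj e x b (M : 'M[C]_(e * x * b)) : adj (swap23 M) = swap23 (adj M).
Proof.
by apply: mx_eq3 => i j u i' j' u'; rewrite adjE !swap23_E adjE.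
Qed.

End P4.
Section P5.
Variable R : realType.
Local Notation C := (R[i]).

Lemma mulmxA4 n (X Y Z W : 'M[C]_n) : X *m Y *m Z *m W = X *m (Y *m Z *m W).
Proof. by rewrite !mulmxA. Qed.

Lemma G_split a b c (P : 'M[C]_a) (Q : 'M[C]_b) :
  kron (kron P Q) (1%:M : 'M[C]_c) =
  kron (kron P 1%:M) 1%:M *m kron (kron 1%:M Q) 1%:M.
Proof. by rewrite !kron_mul !mulmx1 !mul1mx. Qed.

Lemma G_split' a b c (P : 'M[C]_a) (Q : 'M[C]_b) :
  kron (kron P Q) (1%:M : 'M[C]_c) =
  kron (kron 1%:M Q) 1%:M *m kron (kron P 1%:M) 1%:M.
Proof. by rewrite !kron_mul !mulmx1 !mul1mx. Qed.

Lemma L_ptrB_conj a b c (P : 'M[C]_a) (Q : 'M[C]_b) (w : 'M[C]_(a * b * c)) :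
  unitary Q ->
  ptrB (kron (kron P Q) 1%:M *m w *m adj (kron (kron P Q) 1%:M)) =
  kron P 1%:M *m ptrB w *m adj (kron P 1%:M).
Proof.
move=> hQ; rewrite G_split adj_mul !adj_kron !adjmx1 !mulmxA ptrB_mulr.
rewrite mulmxA4 ptrB_mull -(mulmxA (kron (kron 1%:M Q) 1%:M)) ptrB_cyc -(mulmxA w) !kron_mul.
by rewrite unitary_l // !mulmx1 !kron11 mulmx1.
Qed.

Lemma L_ptrAB_conj a b c (P : 'M[C]_a) (Q : 'M[C]_b) (w : 'M[C]_(a * b * c)) :
  unitary P -> unitary Q ->
  ptrAB (kron (kron P Q) 1%:M *m w *m adj (kron (kron P Q) 1%:M)) = ptrAB w.
Proof.
move=> hP hQ; rewrite -mulmxA ptrAB_cyc -mulmxA !adj_kron adjmx1 !kron_mul.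
by rewrite !unitary_l // !mulmx1 !kron11 mulmx1.
Qed.

Lemma L_extB_conj a b c (P : 'M[C]_a) (X : 'M[C]_(a * c)) :
  extB (b := b) (kron P 1%:M *m X *m adj (kron P 1%:M)) =
  kron (kron P 1%:M) 1%:M *m extB X *m adj (kron (kron P 1%:M) 1%:M).
Proof. by rewrite !adj_kron !adjmx1 extB_mulr extB_mull. Qed.

Lemma L_mid n (GP GQ S Om : 'M[C]_n) :
  adj GP *m GP = 1%:M -> S *m GQ = GQ *m S -> adj GQ *m S = S *m adj GQ ->
  (GP *m S *m adj GP) *m ((GP *m GQ) *m Om *m adj (GP *m GQ)) *m (GP *m S *m adj GP)
  = (GP *m GQ) *m (S *m Om *m S) *m adj (GP *m GQ).
Proof.
move=> uP h1 h2; rewrite !adj_mul -!mulmxA !(mulmxA (adj GP) GP) uP !mul1mx.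
rewrite (mulmxA S GQ) h1 -(mulmxA GQ S).
by rewrite (mulmxA (adj GQ) S) h2 -(mulmxA S (adj GQ)).
Qed.

Lemma L_ptrA_conj a b c (P : 'M[C]_a) (Q : 'M[C]_b) (Y : 'M[C]_(a * b * c)) :
  unitary P ->
  ptrA (kron (kron P Q) 1%:M *m Y *m adj (kron (kron P Q) 1%:M)) =
  kron Q 1%:M *m ptrA Y *m adj (kron Q 1%:M).
Proof.
move=> hP; rewrite G_split' adj_mul !adj_kron !adjmx1 !mulmxA ptrA_mulr.
rewrite mulmxA4 ptrA_mull -(mulmxA (kron (kron P 1%:M) 1%:M)) ptrA_cyc -(mulmxA Y) !kron_mul.
by rewrite unitary_l // !mulmx1 !kron11 mulmx1.
Qed.

Lemma L_comm n (T K X : 'M[C]_n) :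
  T *m K = K *m T -> adj K *m T = T *m adj K ->
  T *m (K *m X *m adj K) *m T = K *m (T *m X *m T) *m adj K.
Proof.
move=> h1 h2; rewrite !mulmxA h1 -!mulmxA; congr (_ *m _).
by rewrite h2.
Qed.

Lemma L_tr n (K X : 'M[C]_n) : unitary K -> \tr (K *m X *m adj K) = \tr X.
Proof. by move=> hK; rewrite mxtrace_mulC mulmxA unitary_l // mul1mx. Qed.

Lemma herm3 n (T X : 'M[C]_n) : adj T = T -> adj X = X ->
  adj (T *m X *m T) = T *m X *m T.
Proof. by move=> hT hX; rewrite !adj_mul hT hX mulmxA. Qed.

Lemma cmi_inv a b c (alpha : R) (P : 'M[C]_a) (Q : 'M[C]_b) (w : 'M[C]_(a * b * c)) :
  unitary P -> unitary Q -> adj w = w ->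
  renyi_cmi alpha (kron (kron P Q) (1%:M : 'M[C]_c) *m w *m
                   adj (kron (kron P Q) 1%:M)) = renyi_cmi alpha w.
Proof.
move=> hP hQ hw.
have uK : unitary (kron P (1%:M : 'M[C]_c)) by apply: unitary_kron => //; apply: unitary1.
have uK' : unitary (kron Q (1%:M : 'M[C]_c)) by apply: unitary_kron => //; apply: unitary1.
have uG : unitary (kron (kron P Q) (1%:M : 'M[C]_c)).
  by apply: unitary_kron; [apply: unitary_kron | apply: unitary1].
rewrite /renyi_cmi; cbv zeta.
rewrite (L_ptrB_conj P w hQ) (L_ptrAB_conj w hP hQ).
have hB : adj (ptrB w) = ptrB w by rewrite ptrB_adj hw.
rewrite (mxpow_conj _ hB uK) L_extB_conj (mxpow_conj _ hw uG) (G_split c P Q).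
set S := extB _.
set Om := mxpow w alpha.
have e1 : adj (kron (kron P (1%:M : 'M[C]_b)) (1%:M : 'M[C]_c)) *m
          kron (kron P 1%:M) 1%:M = 1%:M.
  by rewrite !adj_kron !adjmx1 !kron_mul (unitary_l hP) !mulmx1 !kron11.
have e2 : S *m kron (kron (1%:M : 'M[C]_a) Q) (1%:M : 'M[C]_c) =
          kron (kron 1%:M Q) 1%:M *m S by rewrite extB_comm.
have e3 : adj (kron (kron (1%:M : 'M[C]_a) Q) (1%:M : 'M[C]_c)) *m S =
          S *m adj (kron (kron 1%:M Q) 1%:M).
  by rewrite !adj_kron !adjmx1 extB_comm.
rewrite (L_mid _ e1 e2 e3) -(G_split c P Q) (L_ptrA_conj _ _ hP).
set T := kron _ (mxpow _ _).
have hT1 : T *m kron Q 1%:M = kron Q 1%:M *m T.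
  by rewrite /T !kron_mul mulmx1 mul1mx mulmx1 mul1mx.
have hT2 : adj (kron Q 1%:M) *m T = T *m adj (kron Q 1%:M).
  by rewrite /T !adj_kron adjmx1 !kron_mul mulmx1 mul1mx mulmx1 mul1mx.
have hI : adj (T *m ptrA (S *m Om *m S) *m T) = T *m ptrA (S *m Om *m S) *m T.
  apply: herm3; first by rewrite /T adj_kron adjmx1 mxpow_herm.
  rewrite ptrA_adj herm3 //; first by rewrite /S extB_adj mxpow_herm.
  exact: mxpow_herm.
rewrite (L_comm _ hT1 hT2) (mxpow_conj _ hI uK') (L_tr _ uK').
reflexivity.
Qed.

End P5.
Section P6.
Variable R : realType.
Local Notation C := (R[i]).

Lemma mx_eq3c a b c n (A B : 'M[C]_(a * b * c, n)) :
  (forall i j k s, A (idx3 i j k) s = B (idx3 i j k) s) -> A = B.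
Proof.
move=> H; apply/matrixP => r s.
case: (mxtens.mxtens_indexP r) => ij k; case: (mxtens.mxtens_indexP ij) => i j.
exact: H.
Qed.

Lemma meas_gen_conj d k (U : 'M[C]_d) (S : 'I_k -> 'M[C]_d) :
  (\sum_(x < k) \sum_(a' < d) \sum_(a0 < d)
     (U *m S x *m adj U) a' a0 *: delta_mx (idx3 a' x x) a0 : 'M[C]_(d * k * k, d))
  = kron (kron U 1%:M) (1%:M : 'M[C]_k) *m
    (\sum_(x < k) \sum_(a' < d) \sum_(a0 < d)
     S x a' a0 *: delta_mx (idx3 a' x x) a0 : 'M[C]_(d * k * k, d)) *m adj U.
Proof.
apply: mx_eq3c => a' x y a0.
rewrite (meas_iso_gen (fun x => U *m S x *m adj U)).
symmetry; rewrite mxE.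
under eq_bigr => s _ do rewrite mul3l_ml.
under eq_bigr => s _ do under eq_bigr => p _ do rewrite meas_iso_gen.
symmetry; rewrite !mxE mulr_suml; apply: eq_bigr => s _.
rewrite !mxE !mulr_suml; apply: eq_bigr => p _.
by ring.
Qed.

Lemma meas_iso_conj d k (L : 'I_k -> 'M[C]_d) (U : 'M[C]_d) :
  unitary U -> (forall x, adj (L x) = L x) ->
  meas_iso (fun x => U *m L x *m adj U) =
  kron (kron U 1%:M) (1%:M : 'M[C]_k) *m meas_iso L *m adj U.
Proof.
move=> hU hL; rewrite /meas_iso.
under eq_bigr => x _ do rewrite (mxpow_conj _ (hL x) hU).
exact: (meas_gen_conj U (fun x => mxpow (L x) (2^-1))).
Qed.

Lemma W_conj e dA dB (GU : 'M[C]_e) (M : 'M[C]_(e, dA)) (U : 'M[C]_dA)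
  (V : 'M[C]_dB) (rho : 'M[C]_(dA * dB)) : unitary U ->
  kron GU (1%:M : 'M[C]_dB) *m kron M 1%:M *m kron (adj U) 1%:M *m
    (kron U V *m rho *m adj (kron U V)) *m
    adj (kron GU 1%:M *m kron M 1%:M *m kron (adj U) 1%:M)
  = kron GU V *m (kron M 1%:M *m rho *m adj (kron M 1%:M)) *m adj (kron GU V).
Proof.
move=> hU.
have e1 : kron GU (1%:M : 'M[C]_dB) *m kron M 1%:M *m kron (adj U) 1%:M *m kron U V
          = kron GU V *m kron M 1%:M.
  by rewrite !kron_mul ?mulmx1 ?mul1mx -mulmxA unitary_l // ?mulmx1 ?mul1mx.
have cc : forall n m (A : 'M[C]_(n, m)) (K X : 'M[C]_m),
    A *m (K *m X *m adj K) *m adj A = (A *m K) *m X *m adj (A *m K).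
  by move=> n m A K X; rewrite !adj_mul !mulmxA.
by rewrite cc e1 !adj_mul !mulmxA.
Qed.

Lemma post_meas_conj dA dB k (L : 'I_k -> 'M[C]_dA) (rho : 'M[C]_(dA * dB))
  (U : 'M[C]_dA) (V : 'M[C]_dB) :
  unitary U -> unitary V -> (forall x, adj (L x) = L x) ->
  post_meas (fun x => U *m L x *m adj U) (kron U V *m rho *m adj (kron U V)) =
  kron (kron (kron U 1%:M) V) (1%:M : 'M[C]_k) *m post_meas L rho *m
  adj (kron (kron (kron U 1%:M) V) 1%:M).
Proof.
move=> hU hV hL; rewrite /post_meas (meas_iso_conj hU hL).
have eW : kron (kron (kron U 1%:M) 1%:M *m meas_iso L *m adj U) (1%:M : 'M[C]_dB)
  = kron (kron (kron U 1%:M) (1%:M : 'M[C]_k)) 1%:M *m kron (meas_iso L) 1%:M *m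
    kron (adj U) 1%:M by rewrite !kron_mul !mulmx1.
rewrite eW W_conj // !adj_kron !adjmx1 swap23_mulr swap23_mull.
by [].
Qed.

Lemma post_meas_herm dA dB k (L : 'I_k -> 'M[C]_dA) (rho : 'M[C]_(dA * dB)) :
  adj rho = rho -> adj (post_meas L rho) = post_meas L rho.
Proof. by move=> hr; rewrite /post_meas swap23_adj !adj_mul adjK hr mulmxA. Qed.

Lemma core_eq (alpha : R) dA dB k (L : 'I_k -> 'M[C]_dA) (rho : 'M[C]_(dA * dB))
  (U : 'M[C]_dA) (V : 'M[C]_dB) :
  unitary U -> unitary V -> adj rho = rho -> povm L ->
  renyi_cmi alpha (post_meas (fun x => U *m L x *m adj U)
                             (kron U V *m rho *m adj (kron U V))) =
  renyi_cmi alpha (post_meas L rho).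
Proof.
move=> hU hV hr [hL _].
have hL' : forall x, adj (L x) = L x by move=> x; case: (hL x).
rewrite (post_meas_conj _ hU hV hL').
apply: cmi_inv => //; last exact: post_meas_herm.
by apply: unitary_kron => //; apply: unitary1.
Qed.

Lemma povm_conj d k (L : 'I_k -> 'M[C]_d) (U : 'M[C]_d) :
  unitary U -> povm L -> povm (fun x => U *m L x *m adj U).
Proof.
move=> hU [hL hs]; split.
  move=> x; case: (hL x) => h1 h2; split; first by rewrite !adj_mul adjK h1 mulmxA.
  by move=> v; move: (h2 (adj U *m v)); rewrite !adj_mul adjK !mulmxA.
by rewrite -mulmx_suml -mulmx_sumr hs mulmx1 unitary_r.
Qed.

Lemma back_eq dA dB (U : 'M[C]_dA) (V : 'M[C]_dB) (rho : 'M[C]_(dA * dB)) :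
  unitary U -> unitary V ->
  kron (adj U) (adj V) *m (kron U V *m rho *m adj (kron U V)) *m
    adj (kron (adj U) (adj V)) = rho.
Proof.
move=> hU hV; rewrite !adj_kron !adjK !mulmxA kron_mul !unitary_l // kron11 mul1mx.
by rewrite -mulmxA kron_mul !unitary_l // kron11 mulmx1.
Qed.

End P6.
Unset Implicit Arguments.
Theorem proposition9 (R : realType) (alpha : R)
  (halpha0 : 0 < alpha) (halpha1 : alpha != 1)
  (dA dB : nat) (rho : 'M[R[i]]_(dA * dB))
  (U : 'M[R[i]]_dA) (V : 'M[R[i]]_dB) :
  is_state rho -> unitary U -> unitary V ->
  renyi_discord alpha (kron U V *m rho *m adj (kron U V)) =
  renyi_discord alpha rho.
Proof.
move=> [[hr _] _] hU hV.
have hr' : adj (kron U V *m rho *m adj (kron U V)) = kron U V *m rho *m adj (kron U V).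
  by rewrite !adj_mul adjK hr mulmxA.
rewrite /renyi_discord; apply: (f_equal (@ereal_inf _)).
apply/seteqP; split => r [k [L [hL ->]]].
  exists k, (fun x => adj U *m L x *m adj (adj U)); split.
    by apply: povm_conj => //; apply: unitary_adj.
  have E := core_eq alpha (unitary_adj hU) (unitary_adj hV) hr' hL.
  rewrite (back_eq rho hU hV) in E.
  by apply: congr1; exact: (esym E).
exists k, (fun x => U *m L x *m adj U); split; first exact: povm_conj.
by apply: congr1; exact: (esym (core_eq alpha hU hV hr hL)).
Qed.
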